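(* Let $k$ be a field of characteristic $0$, $R=k[x_1,\ldots,x_n]$, and let $I\subset R$ be a homogeneous Artinian ideal, with $f_2,\ldots,f_n$ and $J_1,\ldots,J_{n-1}$ defined for $\mathrm{gin}(I)$ as in the context. Then $\mathrm{gin}(I)$ is almost reverse lexicographic if and only if for every $1\le i\le n-1$ the following two conditions hold: (1) $f_{i+1}(0,\ldots,0,|\alpha|+1)+1\le f_{i+1}(\alpha)$ for every $\alpha=(\alpha_1,\ldots,\alpha_i)\in J_i$; (2) $f_{i+1}(\beta)\le f_{i+1}(\alpha)$ for all $\alpha,\beta\in J_i$ with $|\alpha|=|\beta|$ and $\alpha<\beta$.
   Context: Monomials of $R$ are ordered by the degree reverse lexicographic order with $x_1>\cdots>x_n$; $\mathrm{gin}(I)$ is the generic initial ideal of $I$ with respect to this order. A homogeneous ideal is Artinian if $R/I$ is finite-dimensional over $k$. A monomial ideal $J$ is almost reverse lexicographic if for every minimal generator $m$ of $J$ and every monomial $M$ with $\deg M=\deg m$ and $M>m$, we have $M\in J$. Define $f_1=\min\{t\mid x_1^t\in\mathrm{gin}(I)\}$ and for $2\le i\le n$, $f_i(\alpha_1,\ldots,\alpha_{i-1})=\min\{t\ge0\mid x_1^{\alpha_1}\cdots x_{i-1}^{\alpha_{i-1}}x_i^t\in\mathrm{gin}(I)\}$ (value $\infty$ if none). For $1\le i\le n-1$, $J_i=\{(\alpha_1,\ldots,\alpha_i)\in\mathbb{Z}_{\ge0}^i\mid \alpha_1<f_1,\ \alpha_j<f_j(\alpha_1,\ldots,\alpha_{j-1})\text{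 for }2\le j\le i\}$. For $\alpha\in\mathbb{Z}_{\ge0}^i$, $|\alpha|=\sum_j\alpha_j$, and for $\alpha,\beta\in\mathbb{Z}_{\ge0}^i$ we write $\alpha<\beta$ if $x_1^{\alpha_1}\cdots x_i^{\alpha_i}<x_1^{\beta_1}\cdots x_i^{\beta_i}$ in the reverse lexicographic order. *)

(* Defs.v *)
From HB Require Import structures.
From mathcomp Require Import all_boot all_order all_algebra.
From mathcomp Require Import finmap mpoly.
From Stdlib Require Import ClassicalEpsilon.

Set Implicit Arguments.
Unset Strict Implicit.
Unset Printing Implicit Defensive.

Import GRing.Theory.
Local Open Scope ring_scope.

Section GinDefs.
Variables (n : nat) (k : fieldType).

Definition is_ideal (I : {mpoly k[n]} -> Prop) : Prop :=
  [/\ I 0,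
      (forall f g, I f -> I g -> I (f + g)) &
      (forall r f, I f -> I (r * f))].

Definition homog_comp (d : nat) (f : {mpoly k[n]}) : {mpoly k[n]} :=
  \sum_(m <- msupp f | mdeg m == d) f@_m *: 'X_[m].

Definition is_homogeneous_ideal (I : {mpoly k[n]} -> Prop) : Prop :=
  is_ideal I /\ forall f d, I f -> I (homog_comp d f).

(* Artinian: R/I finite-dimensional over k, i.e. finitely many polynomials
   span R modulo I *)
Definition is_artinian (I : {mpoly k[n]} -> Prop) : Prop :=
  exists s : seq {mpoly k[n]}, forall f : {mpoly k[n]},
    exists c : nat -> k, I (f - \sum_(j < size s) c j *: nth 0 s j).

(* drevlt a b  <->  x^a < x^b *)
Definition drevlt (a b : 'X_{1..n}) : Prop :=
  (mdeg a < mdeg b)%N \/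
  (mdeg a = mdeg b /\
   exists i : 'I_n, (b i < a i)%N /\ forall j : 'I_n, (i < j)%N -> a j = b j).

Definition is_lead_mono (f : {mpoly k[n]}) (m : 'X_{1..n}) : Prop :=
  m \in msupp f /\ forall m', m' \in msupp f -> m' = m \/ drevlt m' m.

(* initial ideal, described by the set of monomials it contains *)
Definition in_ideal (I : {mpoly k[n]} -> Prop) (m : 'X_{1..n}) : Prop :=
  exists f, [/\ I f, f != 0 & is_lead_mono f m].

Definition coord_change (g : 'M[k]_n) (f : {mpoly k[n]}) : {mpoly k[n]} :=
  f \mPo [tuple \sum_(j < n) g i j *: 'X_j | i < n].

Definition act_ideal (g : 'M[k]_n) (I : {mpoly k[n]} -> Prop) :
  {mpoly k[n]} -> Prop :=
  fun h => exists f, I f /\ h = coord_change g f.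

(* J is the generic initial ideal of I: there is a nonempty Zariski open set
   {g | g invertible, P(g) <> 0} (P a nonzero polynomial in the n*n entries)
   on which in(g.I) = J. *)
Definition is_gin (I : {mpoly k[n]} -> Prop) (J : 'X_{1..n} -> Prop) : Prop :=
  exists P : {mpoly k[n * n]}, P != 0 /\
    forall g : 'M[k]_n, g \in unitmx ->
      P.@[fun ij => mxvec g 0 ij] != 0 ->
      forall m, in_ideal (act_ideal g I) m <-> J m.

Definition mdivides (a b : 'X_{1..n}) : Prop := forall i : 'I_n, (a i <= b i)%N.

Definition min_gen (J : 'X_{1..n} -> Prop) (m : 'X_{1..n}) : Prop :=
  J m /\ forall m', mdivides m' m -> m' <> m -> ~ J m'.

Definition almost_revlex (J : 'X_{1..n} -> Prop) : Prop :=
  forall m, min_gen J m ->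
    forall M : 'X_{1..n}, mdeg M = mdeg m -> drevlt m M -> J M.

(* the monomial x_1^{s_1} ... x_l^{s_l} (entries beyond n ignored) *)
Definition mono_of (s : seq nat) : 'X_{1..n} := [multinom nth 0%N s i | i < n].

End GinDefs.

(* ---------- extended naturals: None = infinity ---------- *)
Definition ole (a b : option nat) : bool :=
  match a, b with
  | _, None => true
  | None, Some _ => false
  | Some x, Some y => (x <= y)%N
  end.
Definition olt (a b : option nat) : bool :=
  match a, b with
  | None, _ => false
  | Some _, None => true
  | Some x, Some y => (x < y)%N
  end.
Definition osucc (a : option nat) : option nat := omap S a.

Definition omin (P : nat -> Prop) : option nat :=
  epsilon (inhabits None)
    (fun o => match o with
              | Some t => P t /\ forall s, P s -> (t <= s)%N
              | None => forall s, ~ P s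
              end).

Section FJ.
Variables (n : nat).
(* f_{l+1}(alpha) for alpha = (alpha_1..alpha_l) (l = size alpha):
   min { t | x^alpha x_{l+1}^t in J }; with alpha = [::] this is f_1. *)
Definition fJ (J : 'X_{1..n} -> Prop) (alpha : seq nat) : option nat :=
  omin (fun t => J (mono_of n (rcons alpha t))).

(* alpha in J_i (i = size alpha) *)
Definition inJset (J : 'X_{1..n} -> Prop) (alpha : seq nat) : Prop :=
  forall j, (j < size alpha)%N -> olt (Some (nth 0%N alpha j)) (fJ J (take j alpha)).
End FJ.

(* Main.v *)
Require Import Defs.
From HB Require Import structures.
From mathcomp Require Import all_boot all_order all_algebra.
From mathcomp Require Import finmap mpoly.
From Stdlib Require Import ClassicalEpsilon Classical.
From mathcomp Require Import zify.
From Stdlib Require Import Lia.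

Set Implicit Arguments.
Unset Strict Implicit.
Unset Printing Implicit Defensive.


Lemma min_exists (P : nat -> Prop) t : P t -> exists t0, P t0 /\ forall s, P s -> (t0 <= s)%N.
Proof.
elim: t {-2}t (leqnn t) => [|t IH] u Hu Pu.
  move: Hu; rewrite leqn0 => /eqP Hu; subst u.
  by exists 0%N; split.
case: (classic (exists s, P s /\ (s < u)%N)) => [[s [Ps Hs]]|H].
  by apply: (IH s) => //; rewrite -ltnS (leq_trans Hs Hu).
exists u; split=> // s Ps; rewrite leqNgt; apply/negP => Hs.
by apply: H; exists s.
Qed.

Lemma omin_spec (P : nat -> Prop) :
  match omin P with
  | Some t => P t /\ forall s, P s -> (t <= s)%N
  | None => forall s, ~ P s
  end.
Proof.
rewrite /omin; apply: (epsilon_spec (inhabits None) (fun o => match o with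
              | Some t => P t /\ forall s, P s -> (t <= s)%N
              | None => forall s, ~ P s
              end)).
case: (classic (exists t, P t)) => [[t Pt]|H].
  by have [t0 H0] := min_exists Pt; exists (Some t0).
by exists None => s Ps; apply: H; exists s.
Qed.

Lemma omin_le (P : nat -> Prop) t :
  (forall a b, (a <= b)%N -> P a -> P b) ->
  ole (omin P) (Some t) <-> P t.
Proof.
move=> Pmono; have := omin_spec P; case: (omin P) => [a [Pa Ha]|HN] /=; split.
- by move=> Hat; exact: Pmono Hat Pa.
- by move=> Pt; exact: Ha.
- by [].
- by move=> Pt; case: (HN t).
Qed.

Lemma ole_succ_iff (A B : option nat) :
  ole (osucc A) B <-> forall t, ole B (Some t) -> (0 < t)%N /\ ole A (Some t.-1).
Proof.
case: A => [a|]; case: B => [b|] //=; split.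
- by move=> H t Hbt; split; lia.
- by move=> H; have [H1 H2] := H b (leqnn b); lia.
- by [].
- by move=> H; case: (H b (leqnn b)).
Qed.

Lemma ole_iff (A B : option nat) :
  ole B A <-> forall t, ole A (Some t) -> ole B (Some t).
Proof.
case: A => [a|]; case: B => [b|] //=; split => [H t Ht|H] //;
  try exact: leq_trans H Ht; try exact: H _ (leqnn _).
Qed.


Lemma mono_ofE n s (j : 'I_n) : mono_of n s j = nth 0%N s j.
Proof. by rewrite /mono_of mnmE. Qed.

Lemma mono_rcons n a t (j : 'I_n) : mono_of n (rcons a t) j =
  if (j < size a)%N then nth 0%N a j else if j == size a :> nat then t else 0%N.
Proof. by rewrite mono_ofE nth_rcons. Qed.

Lemma sum_nth_ord n s : (size s <= n)%N -> (\sum_(j < n) nth 0%N s j)%N = sumn s.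
Proof.
move=> Hs; rewrite -(big_mkord xpredT (fun j => nth 0%N s j)) /=.
rewrite (big_cat_nat (leq0n (size s)) Hs) /=.
rewrite [X in (_ + X)%N]big_nat_cond [X in (_ + X)%N]big1 ?addn0; last first.
  by move=> j /andP[/andP[Hj _] _]; rewrite nth_default.
elim: s {Hs} => [|x s IH]; first by rewrite big_geq.
by rewrite /= big_ltn // big_add1 /= IH.
Qed.

Lemma mdeg_mono n s : (size s <= n)%N -> mdeg (mono_of n s) = sumn s.
Proof.
move=> Hs; rewrite mdegE -(sum_nth_ord Hs); apply: eq_bigr => j _.
by rewrite mono_ofE.
Qed.

Definition upclosed n (J : 'X_{1..n} -> Prop) :=
  forall m m', mdivides m m' -> J m -> J m'.

Lemma fJ_le n (J : 'X_{1..n} -> Prop) a t : upclosed J ->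
  ole (fJ J a) (Some t) <-> J (mono_of n (rcons a t)).
Proof.
move=> HU; apply: omin_le => x y Hxy; apply: HU => j.
by rewrite !mono_rcons; case: ifP => //; case: ifP.
Qed.

Lemma mono_take_rcons n a j :
  (j < size a)%N -> mdivides (mono_of n (rcons (take j a) (nth 0%N a j))) (mono_of n a).
Proof.
move=> Hj k; rewrite mono_rcons mono_ofE size_take Hj.
case: ltnP => Hk; first by rewrite nth_take.
case: eqP => [->|] //.
Qed.

Lemma inJset_iff n (J : 'X_{1..n} -> Prop) a : upclosed J -> (0 < size a)%N ->
  inJset J a <-> ~ J (mono_of n a).
Proof.
move=> HU Ha; split.
- move=> H; have := H (size a).-1 (eq_ind_r is_true Ha (ltn_predL _)).
  have -> : olt (Some (nth 0%N a (size a).-1)) (fJ J (take (size a).-1 a)) =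
     ~~ ole (fJ J (take (size a).-1 a)) (Some (nth 0%N a (size a).-1)).
    by case: (fJ _ _) => //= y; rewrite ltnNge.
  move/negP=> H1 H2; apply: H1; apply/fJ_le => //.
  suff -> : rcons (take (size a).-1 a) (nth 0%N a (size a).-1) = a by [].
  by rewrite -take_nth ?(ltn_predK Ha) ?take_size // ltn_predL.
- move=> H j Hj.
  have -> : olt (Some (nth 0%N a j)) (fJ J (take j a)) =
     ~~ ole (fJ J (take j a)) (Some (nth 0%N a j)).
    by case: (fJ _ _) => //= y; rewrite ltnNge.
  apply/negP => /(fJ_le _ _ HU) H1; apply: H; apply: HU H1.
  exact: mono_take_rcons.
Qed.

Lemma mdiv_deg n (a b : 'X_{1..n}) : mdivides a b -> (mdeg a <= mdeg b)%N.
Proof. by move=> H; rewrite !mdegE; apply: leq_sum => j _; apply: H. Qed.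

Lemma mdiv_gap n (a b : 'X_{1..n}) (j : 'I_n) : mdivides a b ->
  (mdeg a + (b j - a j) <= mdeg b)%N.
Proof.
move=> H; rewrite !mdegE (bigD1 j) //= [X in (_ <= X)%N](bigD1 j) //=.
have Hs : (\sum_(i < n | i != j) a i <= \sum_(i < n | i != j) b i)%N.
  by apply: leq_sum => i _; apply: H.
have := H j; move: Hs; move: (\sum_(i < n | i != j) a i) (\sum_(i < n | i != j) b i) => x y; lia.
Qed.

Lemma mdiv_eq n (a b : 'X_{1..n}) : mdivides a b -> mdeg a = mdeg b -> a = b.
Proof.
move=> H Hd; apply/mnmP => j; apply/eqP; rewrite eqn_leq H /=.
have := mdiv_gap j H; rewrite Hd; lia.
Qed.

Lemma sub_mono n (b : 'X_{1..n}) w : (w <= mdeg b)%N ->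
  exists d, mdivides d b /\ mdeg d = w.
Proof.
elim: w => [|w IH] Hw.
  by exists 0%MM; split; [move=> j; rewrite mnm0E | rewrite mdeg0].
have [d [Hdb Hdw]] := IH (ltnW Hw).
have [j Hj] : exists j, (d j < b j)%N.
  apply: NNPP => Hn; have Heq : d = b.
    apply/mnmP => j; apply/eqP; rewrite eqn_leq Hdb /= leqNgt; apply/negP => Hlt.
    by apply: Hn; exists j.
  by move: Hw; rewrite -Heq Hdw ltnn.
exists (d + U_(j))%MM; split; last by rewrite mdegD mdeg1 Hdw addn1.
move=> k; rewrite mnmDE mnm1E; case: (eqVneq j k) => [<-|_] /=.
  by rewrite addn1.
by rewrite addn0 Hdb.
Qed.

Lemma min_gen_exists n (J : 'X_{1..n} -> Prop) m : J m ->
  exists g, min_gen J g /\ mdivides g m.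
Proof.
elim: (mdeg m) {-2}m (leqnn (mdeg m)) => [|d IH] m0 Hd Jm.
  exists m0; split; last by move=> j.
  split=> // m' Hm' Hne; exfalso; apply: Hne; apply: mdiv_eq => //.
  by apply/eqP; rewrite eqn_leq (mdiv_deg Hm') /= (leq_trans Hd).
case: (classic (min_gen J m0)) => [Hg|Hng]; first by exists m0; split => // j.
have [m' [Hdiv [Hne Jm']]] : exists m', mdivides m' m0 /\ m' <> m0 /\ J m'.
  apply: NNPP => H; apply: Hng; split=> // m' Hm' Hne Jm'.
  by apply: H; exists m'.
have Hlt : (mdeg m' < mdeg m0)%N.
  rewrite ltn_neqAle (mdiv_deg Hdiv) andbT; apply/eqP => Heq.
  by apply: Hne; apply: mdiv_eq.
have [g [Hg Hgm]] := IH m' (leq_trans (leq_trans Hlt Hd) (leqnn _)) Jm'.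
exists g; split => // j; exact: leq_trans (Hgm j) (Hdiv j).
Qed.


Lemma mono_rcons0 n a : mono_of n (rcons a 0%N) = mono_of n a.
Proof.
apply/mnmP => j; rewrite mono_rcons mono_ofE; case: ltnP => // H.
by rewrite nth_default //; case: eqP.
Qed.

Lemma mono_nth_out n a (j : 'I_n) : (size a <= j)%N -> mono_of n a j = 0%N.
Proof. by move=> H; rewrite mono_ofE nth_default. Qed.

Lemma mono_congr_rcons n a b t : size a = size b -> mono_of n a = mono_of n b ->
  mono_of n (rcons a t) = mono_of n (rcons b t).
Proof.
move=> Hs Hab; apply/mnmP => j; rewrite !mono_rcons Hs.
by case: ifP => // _; rewrite -!mono_ofE Hab.
Qed.

Lemma le_mdeg n (m : 'X_{1..n}) j : (m j <= mdeg m)%N.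
Proof. by rewrite mdegE (bigD1 j) //= leq_addr. Qed.

Lemma size_take_mnm n (m : 'X_{1..n}) i : (i <= n)%N -> size (take i m) = i.
Proof. by move=> H; rewrite size_take size_tuple; case: ltnP => // H2; lia. Qed.

Lemma mono_take n (m : 'X_{1..n}) (q : 'I_n) :
  (forall j : 'I_n, (q < j)%N -> m j = 0%N) ->
  m = mono_of n (rcons (take q m) (m q)).
Proof.
move=> H; apply/mnmP => j; rewrite mono_rcons size_take_mnm ?(ltnW (ltn_ord q)) //.
case: ltnP => Hj; first by rewrite nth_take // -mnm_nth.
case: eqP => [Hjq|Hjq]; first by congr (m _); apply: val_inj.
by apply: H; rewrite ltn_neqAle Hj andbT eq_sym; apply/eqP.
Qed.

Lemma mono_take_lt n (m : 'X_{1..n}) i (j : 'I_n) :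
  mono_of n (take i m) j = if (j < i)%N then m j else 0%N.
Proof.
rewrite mono_ofE; case: ltnP => H; first by rewrite nth_take // -mnm_nth.
by rewrite nth_default // size_take; case: ltnP => //; lia.
Qed.

Definition zvec i e := rcons (nseq i.-1 0%N) e.

Lemma size_zvec i e : (0 < i)%N -> size (zvec i e) = i.
Proof. by move=> H; rewrite /zvec size_rcons size_nseq prednK. Qed.

Lemma sumn_zvec i e : sumn (zvec i e) = e.
Proof. by rewrite /zvec sumn_rcons sumn_nseq mul0n. Qed.

Lemma mono_zvec n i e (j : 'I_n) : (0 < i)%N ->
  mono_of n (zvec i e) j = if j == i.-1 :> nat then e else 0%N.
Proof.
move=> Hi; rewrite /zvec mono_rcons size_nseq.
case: ltnP => H; first by rewrite nth_nseq H; case: eqP => // E; lia.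
by [].
Qed.

Lemma mdeg_rcons n a t : (size a < n)%N -> mdeg (mono_of n (rcons a t)) = (sumn a + t)%N.
Proof. by move=> H; rewrite mdeg_mono ?size_rcons // sumn_rcons. Qed.

Lemma mdeg_zvec n i e t : (0 < i)%N -> (i < n)%N ->
  mdeg (mono_of n (rcons (zvec i e) t)) = (e + t)%N.
Proof. by move=> H1 H2; rewrite mdeg_rcons ?size_zvec // sumn_zvec. Qed.

Section Fwd.
End Fwd.

Lemma fwd1 n (J : 'X_{1..n} -> Prop) (HU : upclosed J) (AR : almost_revlex J)
  (i : nat) (Hi1 : (1 <= i)%N) (Hin : (i < n)%N) (a : seq nat) :
  size a = i -> ~ J (mono_of n a) -> forall t, J (mono_of n (rcons a t)) ->
  (0 < t)%N /\ J (mono_of n (rcons (zvec i (sumn a).+1) t.-1)).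
Proof.
move=> Hsa NJa t Jt.
have Ht : (0 < t)%N.
  by rewrite lt0n; apply/negP => /eqP E; move: Jt; rewrite E mono_rcons0.
split=> //.
have [g [[Jg Hmin] Hg]] := min_gen_exists Jt.
pose io : 'I_n := Ordinal Hin.
set s := g io.
have Hgi : forall j : 'I_n, (i < j)%N -> g j = 0%N.
  move=> j Hj; apply/eqP; rewrite -leqn0; apply: leq_trans (Hg j) _.
  by rewrite mono_rcons Hsa ltnNge (ltnW Hj) /= gtn_eqF.
have Hs : (0 < s)%N.
  rewrite lt0n; apply/negP => /eqP Hs0; apply: NJa; apply: HU Jg => j.
  have := Hg j; rewrite mono_rcons mono_ofE Hsa.
  case: ltnP => // Hj; case: eqP => [E|E].
    move=> _; have -> : j = io by apply: ord_inj; rewrite E.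
    by rewrite -/s Hs0.
  by move=> _; rewrite Hgi //; rewrite ltn_neqAle Hj andbT eq_sym; apply/eqP.
have Hst : (s <= t)%N by have := Hg io; rewrite mono_rcons Hsa ltnn eqxx.
have Hdeg : (mdeg g <= sumn a + s)%N.
  have := mdiv_gap io Hg; rewrite mdeg_rcons ?Hsa //.
  rewrite mono_rcons Hsa ltnn eqxx -/s; lia.
have Hsd : (s <= mdeg g)%N by apply: le_mdeg.
pose M := mono_of n (rcons (zvec i (mdeg g - s).+1) s.-1).
have HM : J M.
  apply: (AR g (conj Jg Hmin) M).
    rewrite /M mdeg_zvec //; lia.
  right; split.
    by rewrite /M mdeg_zvec //; lia.
  exists io; split.
    by rewrite /M mono_rcons size_zvec // ltnn eqxx -/s; lia.
  move=> j Hj; rewrite Hgi // /M mono_rcons size_zvec // ltnNge (ltnW Hj) /=.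
  by rewrite gtn_eqF.
apply: HU HM => j; rewrite /M mono_rcons [X in (_ <= X)%N]mono_rcons !size_zvec //.
case: ltnP => Hj.
  rewrite -(@mono_ofE n _ j) -(@mono_ofE n (zvec i _) j) !mono_zvec //.
  by case: eqP => //; lia.
by case: eqP => //; lia.
Qed.

Lemma fwd2 n (J : 'X_{1..n} -> Prop) (HU : upclosed J) (AR : almost_revlex J)
  (i : nat) (Hi1 : (1 <= i)%N) (Hin : (i < n)%N) (a b : seq nat) :
  size a = i -> size b = i -> ~ J (mono_of n a) -> ~ J (mono_of n b) ->
  sumn a = sumn b -> drevlt (mono_of n a) (mono_of n b) ->
  forall t, J (mono_of n (rcons a t)) -> J (mono_of n (rcons b t)).
Proof.
move=> Hsa Hsb NJa NJb Hsum Hab t Jt.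
have [g [[Jg Hmin] Hg]] := min_gen_exists Jt.
pose io : 'I_n := Ordinal Hin.
set s := g io.
have Hgi : forall j : 'I_n, (i < j)%N -> g j = 0%N.
  move=> j Hj; apply/eqP; rewrite -leqn0; apply: leq_trans (Hg j) _.
  by rewrite mono_rcons Hsa ltnNge (ltnW Hj) /= gtn_eqF.
have Hs : (0 < s)%N.
  rewrite lt0n; apply/negP => /eqP Hs0; apply: NJa; apply: HU Jg => j.
  have := Hg j; rewrite mono_rcons mono_ofE Hsa.
  case: ltnP => // Hj; case: eqP => [E|E].
    move=> _; have -> : j = io by apply: ord_inj; rewrite E.
    by rewrite -/s Hs0.
  by move=> _; rewrite Hgi //; rewrite ltn_neqAle Hj andbT eq_sym; apply/eqP.
have Hst : (s <= t)%N by have := Hg io; rewrite mono_rcons Hsa ltnn eqxx.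
have Hdeg : (mdeg g <= sumn a + s)%N.
  have := mdiv_gap io Hg; rewrite mdeg_rcons ?Hsa //.
  rewrite mono_rcons Hsa ltnn eqxx -/s; lia.
have Hsd : (s <= mdeg g)%N by apply: le_mdeg.
have Hbt : mdivides (mono_of n b) (mono_of n (rcons b t)).
  move=> j; rewrite mono_rcons mono_ofE; case: ltnP => H //.
  by rewrite nth_default.
case: (ltnP (mdeg g) (sumn a + s)) => Hlt.
  have [d [Hdb Hdd]] : exists d, mdivides d (mono_of n b) /\ mdeg d = (mdeg g - s).+1.
    apply: sub_mono; rewrite mdeg_mono ?Hsb ?(ltnW Hin) // -Hsum; lia.
  have Hd0 : forall j : 'I_n, (i <= j)%N -> d j = 0%N.
    move=> j Hj; apply/eqP; rewrite -leqn0; apply: leq_trans (Hdb j) _.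
    by rewrite mono_nth_out ?Hsb.
  pose M := [multinom (if j == io then s.-1 else d j) | j < n].
  have HM : J M.
    have HdM : mdeg M = mdeg g.
      rewrite mdegE (bigD1 io) //= mnmE eqxx.
      rewrite (eq_bigr (fun j => d j)); last first.
        by move=> j /negbTE Hj; rewrite mnmE Hj.
      have := Hdd; rewrite mdegE (bigD1 io) //= Hd0 //; lia.
    apply: (AR g (conj Jg Hmin) M) => //.
    right; split => //.
    exists io; split; first by rewrite mnmE eqxx -/s; lia.
    move=> j Hj; rewrite Hgi // mnmE.
    have -> : (j == io) = false by apply/negbTE; rewrite neq_ltn Hj orbT.
    by rewrite Hd0 // ltnW.
  apply: HU HM => j; rewrite mnmE mono_rcons Hsb.
  case: eqP => [->|Hj].
    by rewrite /= ltnn eqxx; lia.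
  have := Hdb j; rewrite mono_ofE; case: ltnP => Hji //.
  by rewrite Hd0.
have Hge : g = mono_of n (rcons a s).
  apply: mdiv_eq; last by rewrite mdeg_rcons ?Hsa //; lia.
  move=> j; have := Hg j; rewrite !mono_rcons Hsa.
  case: ltnP => // _; case: eqP => [E|_] //.
  by have -> : j = io by apply: ord_inj; rewrite E.
pose M := mono_of n (rcons b s).
have HM : J M.
  apply: (AR g (conj Jg Hmin) M).
    by rewrite /M mdeg_rcons ?Hsb // -Hsum; lia.
  right; split; first by rewrite /M mdeg_rcons ?Hsb // -Hsum; lia.
  case: Hab => [|[_ [p [Hp1 Hp2]]]].
    by rewrite !mdeg_mono ?Hsa ?Hsb ?(ltnW Hin) // Hsum ltnn.
  have Hpi : (p < i)%N.
    rewrite ltnNge; apply/negP => Hpi; move: Hp1.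
    by rewrite [X in (_ < X)%N]mono_nth_out // Hsa.
  exists p; split.
    by rewrite Hge /M !mono_rcons Hsa Hsb Hpi -!mono_ofE.
  move=> j Hj; rewrite Hge /M !mono_rcons Hsa Hsb.
  by case: ifP => // _; rewrite -!mono_ofE Hp2.
by apply: HU HM => j; rewrite /M !mono_rcons Hsb; case: ifP => //; case: ifP.
Qed.

Definition HC1 n (J : 'X_{1..n} -> Prop) := forall i, (1 <= i)%N -> (i < n)%N ->
  forall a, size a = i -> ~ J (mono_of n a) -> forall t, J (mono_of n (rcons a t)) ->
  (0 < t)%N /\ J (mono_of n (rcons (zvec i (sumn a).+1) t.-1)).

Definition HC2 n (J : 'X_{1..n} -> Prop) := forall i, (1 <= i)%N -> (i < n)%N ->
  forall a b, size a = i -> size b = i -> ~ J (mono_of n a) -> ~ J (mono_of n b) ->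
  sumn a = sumn b -> drevlt (mono_of n a) (mono_of n b) ->
  forall t, J (mono_of n (rcons a t)) -> J (mono_of n (rcons b t)).

Lemma div_rcons n b t : mdivides (mono_of n b) (mono_of n (rcons b t)).
Proof.
move=> j; rewrite mono_rcons mono_ofE; case: ltnP => H //.
by rewrite nth_default.
Qed.

Lemma bwdQ n (J : 'X_{1..n} -> Prop) (HU : upclosed J) (H1 : HC1 J) (H2 : HC2 J)
  i (Hi1 : (1 <= i)%N) (Hin : (i < n)%N)
  (HP : forall c, J (mono_of n (zvec i c)) -> forall m : 'X_{1..n},
     (forall j : 'I_n, (i <= j)%N -> m j = 0%N) -> mdeg m = c -> J m)
  a : size a = i -> ~ J (mono_of n a) -> forall s, J (mono_of n (rcons a s)) ->
  forall b, size b = i -> (sumn a < sumn b)%N -> (sumn b <= sumn a + s)%N ->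
  J (mono_of n (rcons b (sumn a + s - sumn b))).
Proof.
move=> Hsa NJa s Js b Hsb Hab Hbs.
case: (classic (J (mono_of n b))) => [Jb|NJb].
  by apply: HU Jb; apply: div_rcons.
have Hmb : mdeg (mono_of n b) = sumn b by rewrite mdeg_mono // Hsb ltnW.
have NZ : forall e, (e <= sumn b)%N -> ~ J (mono_of n (zvec i e)).
  move=> e He Jz; have [d [Hdb Hdd]] := sub_mono (eq_ind_r (fun x => (e <= x)%N) He Hmb).
  apply: NJb; apply: HU (Hdb) _; apply: (HP e Jz) => // j Hj.
  apply/eqP; rewrite -leqn0; apply: leq_trans (Hdb j) _.
  by rewrite mono_nth_out // Hsb.
have Chain : forall k, (sumn a + k.+1 <= sumn b)%N ->
    J (mono_of n (rcons (zvec i (sumn a + k.+1)) (sumn a + s - (sumn a + k.+1)))).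
  elim=> [|k IH] Hk.
    have [_ HJ] := H1 i Hi1 Hin a Hsa NJa s Js.
    have -> : (sumn a + 1 = (sumn a).+1)%N by lia.
    have -> : (sumn a + s - (sumn a).+1 = s.-1)%N by lia.
    exact: HJ.
  have Hk' : (sumn a + k.+1 <= sumn b)%N by lia.
  have := H1 i Hi1 Hin _ (size_zvec _ Hi1) (NZ _ Hk') _ (IH Hk').
  rewrite sumn_zvec => -[_ HJ].
  have -> : (sumn a + k.+2 = (sumn a + k.+1).+1)%N by lia.
  have -> : (sumn a + s - (sumn a + k.+1).+1 = (sumn a + s - (sumn a + k.+1)).-1)%N by lia.
  exact: HJ.
have Jz : J (mono_of n (rcons (zvec i (sumn b)) (sumn a + s - sumn b))).
  have := Chain (sumn b - sumn a).-1; rewrite (_ : sumn a + (sumn b - sumn a).-1.+1 = sumn b)%N; last by lia.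
  by apply; lia.
have Hmz : mdeg (mono_of n (zvec i (sumn b))) = sumn b.
  by rewrite mdeg_mono ?size_zvec ?sumn_zvec // ltnW.
case: (eqVneq (mono_of n (zvec i (sumn b))) (mono_of n b)) => [E|Ne].
  by rewrite -(@mono_congr_rcons n _ _ _ _ E) // size_zvec.
have Hip : (i.-1 < n)%N by lia.
pose p : 'I_n := Ordinal Hip.
apply: (H2 i Hi1 Hin _ _ (size_zvec _ Hi1) Hsb (NZ _ (leqnn _)) NJb) => //.
  by rewrite sumn_zvec.
right; split; first by rewrite Hmz.
exists p; split.
  rewrite mono_zvec //= eqxx ltn_neqAle -{2}Hmb le_mdeg andbT.
  apply/negP => /eqP E; apply: (negP Ne); apply/eqP; apply: mdiv_eq; last by rewrite Hmz.
  move=> j; rewrite mono_zvec //; case: eqP => // Ej.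
  by rewrite -E (_ : j = p) //; apply: ord_inj; rewrite Ej.
move=> j Hj; have Hj2 : (i <= j)%N by move: Hj; rewrite /p /=; lia.
by rewrite !mono_nth_out ?size_zvec ?Hsb.
Qed.

Lemma mono_nseq0 n i : mono_of n (nseq i 0%N) = 0%MM.
Proof. by apply/mnmP => j; rewrite mono_ofE nth_nseq mnm0E; case: ifP. Qed.

Lemma bwdP n (J : 'X_{1..n} -> Prop) (HU : upclosed J) (H1 : HC1 J) (H2 : HC2 J) :
  forall i, (1 <= i)%N -> (i <= n)%N ->
  forall c, J (mono_of n (zvec i c)) -> forall m : 'X_{1..n},
     (forall j : 'I_n, (i <= j)%N -> m j = 0%N) -> mdeg m = c -> J m.
Proof.
elim=> [|i IH] // _ Hin c Jc m Hm Hmd.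
case: (posnP i) => [Hi0|Hi0].
  subst i; suff -> : m = mono_of n (zvec 1 c) by [].
  apply: mdiv_eq; last by rewrite mdeg_mono ?size_zvec ?sumn_zvec.
  move=> j; rewrite mono_zvec //=; case: eqP => Ej.
    by rewrite -Hmd le_mdeg.
  by rewrite Hm //; case: (nat_of_ord j) Ej.
have Hin' : (i < n)%N by [].
pose io : 'I_n := Ordinal Hin'.
have HP := IH Hi0 (ltnW Hin').
have Ha : zvec i.+1 c = rcons (nseq i 0%N) c by [].
case: (classic (J (mono_of n (nseq i 0%N)))) => [J0|NJ0].
  by apply: HU J0 => j; rewrite mono_nseq0 mnm0E.
have Hm' : m = mono_of n (rcons (take io m) (m io)).
  by apply: mono_take => j Hj; apply: Hm.
have Hsb : size (take io m) = i by rewrite size_take_mnm // ltnW.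
have Hdeg : (sumn (take io m) + m io)%N = c.
  by rewrite -Hmd -(@mdeg_rcons n (take io m) (m io)) ?Hsb // -Hm'.
case: (posnP (sumn (take io m))) => Hb.
  have E : mono_of n (take io m) = mono_of n (nseq i 0%N).
    rewrite mono_nseq0; apply/eqP; rewrite -mdeg_eq0 mdeg_mono ?Hb //.
    by rewrite Hsb ltnW.
  rewrite Hm' (mono_congr_rcons _ _ E); last by rewrite size_nseq.
  by move: Jc; rewrite Ha; rewrite (_ : m io = c) //; lia.
move: (bwdQ HU H1 H2 Hi0 Hin' HP (size_nseq i 0%N) NJ0 (Jc : J (mono_of n (rcons (nseq i 0%N) c))) Hsb).
rewrite sumn_nseq mul0n add0n => HQ.
have E : (c - sumn (take io m) = m io)%N by lia.
rewrite {1}Hm' -E; apply: HQ => //; lia.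
Qed.

Lemma bwdAR n (J : 'X_{1..n} -> Prop) (HU : upclosed J) (H1 : HC1 J) (H2 : HC2 J) :
  almost_revlex J.
Proof.
move=> m [Jm Hmin] M HdM Hd.
case: Hd => [|[_ [r [Hr1 Hr2]]]]; first by rewrite HdM ltnn.
have Pr : (0 < m r)%N by apply: leq_ltn_trans Hr1.
case: (arg_maxnP (fun j : 'I_n => nat_of_ord j) (Pr : (fun j : 'I_n => 0 < m j)%N r)) => q Hq Hmax.
have Hmz : forall j : 'I_n, (q < j)%N -> m j = 0%N.
  move=> j Hj; apply/eqP; rewrite -leqn0 leqNgt; apply/negP => Hj0.
  by have := Hmax j Hj0; rewrite /= leqNgt Hj.
have Hrq : (r <= q)%N by exact: (Hmax r Pr).
have HMz : forall j : 'I_n, (q < j)%N -> M j = 0%N.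
  by move=> j Hj; rewrite -Hr2 ?Hmz //; apply: leq_ltn_trans Hj.
case: (posnP (nat_of_ord q)) => Hq0.
  exfalso; have Hr0 : nat_of_ord r = 0%N by lia.
  have Hdiv : mdivides M m.
    move=> j; case: (ltngtP r j) => Hj.
    - by rewrite Hr2.
    - by move: Hj; rewrite Hr0.
    - by rewrite (_ : j = r); [exact: ltnW | apply: ord_inj].
  have := mdiv_gap r Hdiv; rewrite HdM; lia.
have Hqn : (q <= n)%N by apply: ltnW.
have Hm : m = mono_of n (rcons (take q m) (m q)) by apply: mono_take.
have HM : M = mono_of n (rcons (take q M) (M q)) by apply: mono_take.
have Hsa : size (take q m) = q by apply: size_take_mnm.
have Hsb : size (take q M) = q by apply: size_take_mnm.
have NJa : ~ J (mono_of n (take q m)).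
  apply: Hmin.
    by rewrite {2}Hm; apply: div_rcons.
  move=> E; move: Hq; rewrite /= -E mono_take_lt ltnn.
  by [].
have Jma : J (mono_of n (rcons (take q m) (m q))) by rewrite -Hm.
have Hdm : mdeg m = (sumn (take q m) + m q)%N by rewrite {1}Hm mdeg_rcons // Hsa.
have HdM' : mdeg M = (sumn (take q M) + M q)%N by rewrite {1}HM mdeg_rcons // Hsb.
case: (eqVneq r q) => [Erq|Nrq].
  subst r.
  have HQ := bwdQ HU H1 H2 Hq0 (ltn_ord q) (bwdP HU H1 H2 Hq0 Hqn) Hsa NJa Jma Hsb.
  rewrite HM; have -> : M q = (sumn (take q m) + m q - sumn (take q M))%N by lia.
  by apply: HQ; lia.
have Hrq' : (r < q)%N by rewrite ltn_neqAle Hrq andbT; exact: Nrq.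
have HMq : M q = m q by rewrite Hr2.
case: (classic (J (mono_of n (take q M)))) => [Jb|NJb].
  by apply: HU Jb; rewrite {2}HM; apply: div_rcons.
rewrite HM HMq; apply: (H2 q Hq0 (ltn_ord q) _ _ Hsa Hsb NJa NJb) => //.
  by lia.
right; split.
  by rewrite !mdeg_mono ?Hsa ?Hsb //; lia.
exists r; split.
  by rewrite !mono_take_lt Hrq'.
move=> j Hj; rewrite !mono_take_lt; case: ifP => // _; exact: Hr2.
Qed.

Lemma comb_main n (J : 'X_{1..n} -> Prop) (HU : upclosed J) :
  (almost_revlex J <->
   forall i : nat, (1 <= i <= n - 1)%N ->
     (forall alpha : seq nat, size alpha = i -> inJset J alpha ->
        ole (osucc (fJ J (rcons (nseq (i - 1) 0%N) (sumn alpha).+1)))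
            (fJ J alpha)) /\
     (forall alpha beta : seq nat, size alpha = i -> size beta = i ->
        inJset J alpha -> inJset J beta -> sumn alpha = sumn beta ->
        drevlt (mono_of n alpha) (mono_of n beta) ->
        ole (fJ J beta) (fJ J alpha))).
Proof.
split.
- move=> AR i /andP[Hi1 Hin]; have Hin' : (i < n)%N by lia.
  rewrite subn1; split.
  + move=> a Ha /(inJset_iff HU) NJa.
    have {}NJa := NJa (eq_ind_r (fun x => 0 < x)%N Hi1 Ha).
    apply/ole_succ_iff => t /(fJ_le _ _ HU) Jt.
    have [Ht HJ] := fwd1 HU AR Hi1 Hin' Ha NJa Jt.
    by split => //; apply/(fJ_le _ _ HU).
  + move=> a b Ha Hb /(inJset_iff HU) NJa /(inJset_iff HU) NJb Hs Hd.
    have Hpos : (0 < i)%N by [].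
    have {}NJa := NJa (eq_ind_r (fun x => 0 < x)%N Hpos Ha).
    have {}NJb := NJb (eq_ind_r (fun x => 0 < x)%N Hpos Hb).
    apply/ole_iff => t /(fJ_le _ _ HU) Jt; apply/(fJ_le _ _ HU).
    by apply: (fwd2 HU AR Hi1 Hin' Ha Hb NJa NJb Hs Hd).
- move=> H; apply: bwdAR => //.
  + move=> i Hi1 Hin a Ha NJa t Jt.
    have Hi : (1 <= i <= n - 1)%N by apply/andP; split => //; lia.
    have [C1 _] := H i Hi.
    have Ia : inJset J a by apply/(inJset_iff HU) => //; rewrite Ha.
    move: (C1 a Ha Ia); rewrite subn1 => /ole_succ_iff /(_ t).
    case; first by apply/(fJ_le _ _ HU).
    by move=> Ht /(fJ_le _ _ HU).
  + move=> i Hi1 Hin a b Ha Hb NJa NJb Hs Hd t Jt.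
    have Hi : (1 <= i <= n - 1)%N by apply/andP; split => //; lia.
    have [_ C2] := H i Hi.
    have Ia : inJset J a by apply/(inJset_iff HU) => //; rewrite Ha.
    have Ib : inJset J b by apply/(inJset_iff HU) => //; rewrite Hb.
    move: (C2 a b Ha Hb Ia Ib Hs Hd) => /ole_iff /(_ t) H3.
    by apply/(fJ_le _ _ HU); apply: H3; apply/(fJ_le _ _ HU).
Qed.

Import GRing.Theory.
Local Open Scope ring_scope.



Lemma drevlt_add n (a b c : 'X_{1..n}) : drevlt a b -> drevlt (c + a)%MM (c + b)%MM.
Proof.
rewrite /drevlt !mdegD; case=> [H|[Hd [i [H1 H2]]]]; first by left; rewrite ltn_add2l.
right; split; first by rewrite Hd.
exists i; split; first by rewrite !mnmDE ltn_add2l.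
by move=> j Hj; rewrite !mnmDE H2.
Qed.

Lemma mpolyX_neq0 (k : fieldType) n (m : 'X_{1..n}) : ('X_[m] : {mpoly k[n]}) != 0.
Proof.
apply/negP => /eqP H; have := mcoeffX k m m; rewrite H mcoeff0 eqxx.
by move/eqP; rewrite eq_sym oner_eq0.
Qed.

Lemma lead_mulX (k : fieldType) n (f : {mpoly k[n]}) m (i : 'I_n) :
  is_lead_mono f m -> is_lead_mono (f * 'X_i) (m + U_(i))%MM.
Proof.
move=> [Hm Hall]; have Hp := msuppMX f U_(i); split.
  by rewrite (perm_mem Hp); apply/mapP; exists m => //; rewrite addmC.
move=> m'; rewrite (perm_mem Hp) => /mapP [m'' Hm'' ->].
case: (Hall _ Hm'') => [->|H]; first by left; rewrite addmC.
by right; rewrite [(m + _)%MM]addmC; apply: drevlt_add.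
Qed.

Lemma coord_change_lin (k : fieldType) n (g : 'M[k]_n) (i : 'I_n) :
  g \in unitmx ->
  coord_change g (\sum_(j < n) invmx g i j *: 'X_j) = 'X_i.
Proof.
move=> Hg; rewrite /coord_change raddf_sum /=.
under eq_bigr => j _ do rewrite comp_mpolyZ comp_mpolyXU -tnth_nth tnth_mktuple scaler_sumr.
rewrite exchange_big /=.
under eq_bigr => l _ do under eq_bigr => j _ do rewrite scalerA.
under eq_bigr => l _ do rewrite -scaler_suml.
have E : forall l, \sum_(j < n) invmx g i j * g j l = (invmx g *m g) i l.
  by move=> l; rewrite mxE.
under eq_bigr => l _ do rewrite E mulVmx // mxE.
rewrite (bigD1 i) //= eqxx scale1r big1 ?addr0 //.
by move=> j /negbTE Hj; rewrite eq_sym Hj scale0r.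
Qed.

Lemma in_ideal_shift (k : fieldType) n (I : {mpoly k[n]} -> Prop) (HI : is_ideal I)
  (g : 'M[k]_n) (Hg : g \in unitmx) m (i : 'I_n) :
  in_ideal (act_ideal g I) m -> in_ideal (act_ideal g I) (m + U_(i))%MM.
Proof.
case: HI => [_ _ HM] [f [[h [Ih ->]] Hf0 Hlead]].
exists (coord_change g h * 'X_i); split.
- exists ((\sum_(j < n) invmx g i j *: 'X_j) * h); split; first by apply: HM.
  rewrite /coord_change rmorphM /=; have := coord_change_lin i Hg; rewrite /coord_change => ->.
  by rewrite mulrC.
- by rewrite mulf_neq0 // mpolyX_neq0.
- exact: lead_mulX.
Qed.

Lemma upclosed_of n (J : 'X_{1..n} -> Prop) :
  (forall m (i : 'I_n), J m -> J (m + U_(i))%MM) -> upclosed J.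
Proof.
move=> H m m' Hdiv Jm.
have Hle := mdiv_deg Hdiv.
move: {2}(mdeg m' - mdeg m)%N (erefl (mdeg m' - mdeg m)%N) => d.
elim: d m Hdiv Jm Hle => [|d IH] m0 Hdiv Jm Hle Hd.
  by have <- : m0 = m' by apply: mdiv_eq => //; lia.
have [j Hj] : exists j, (m0 j < m' j)%N.
  apply: NNPP => Hn; have E : m0 = m'.
    apply/mnmP => j; apply/eqP; rewrite eqn_leq Hdiv /= leqNgt; apply/negP => Hlt.
    by apply: Hn; exists j.
  by move: Hd; rewrite E subnn.
have Hdiv' : mdivides (m0 + U_(j))%MM m'.
  move=> l; rewrite mnmDE mnm1E; case: (eqVneq j l) => [<-|_] /=.
    by rewrite addn1.
  by rewrite addn0 Hdiv.
apply: (IH _ Hdiv' (H _ _ Jm)); first exact: mdiv_deg.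
by rewrite mdegD mdeg1; lia.
Qed.



Lemma natr_inj (k : fieldType) (char0 : [pchar k] =i pred0) : injective (fun i : nat => i%:R : k).
Proof.
have H := (pcharf0P k).1 char0.
move=> i j /= E; wlog Hij : i j E / (i <= j)%N.
  by move=> W; case: (leqP i j) => Hl; [exact: W | apply/esym; apply: W => //; exact: ltnW].
have : ((j - i)%:R == 0 :> k) by rewrite natrB // E subrr.
by rewrite H subn_eq0 => Hji; apply/eqP; rewrite eqn_leq Hij.
Qed.

Lemma poly_nonroot (k : fieldType) (char0 : [pchar k] =i pred0) (p : {poly k}) :
  p != 0 -> exists x, ~~ root p x.
Proof.
move=> Hp; apply: NNPP => H.
pose rs := [seq (i%:R : k) | i <- iota 0 (size p)].
have Hall : all (root p) rs.
  apply/allP => x _; apply: NNPP => Hx; apply: H; exists x; exact/negP.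
have Hu : uniq rs by rewrite map_inj_uniq ?iota_uniq //; apply: natr_inj.
by have := max_poly_roots Hp Hall Hu; rewrite size_map size_iota ltnn.
Qed.

Definition vext (k : fieldType) m (v : 'I_m -> k) (x : k) : 'I_m.+1 -> k :=
  fun i => match unlift ord_max i with Some j => v j | None => x end.

Lemma muni_eval (k : fieldType) m (v : 'I_m -> k) (x : k) (p : {mpoly k[m.+1]}) :
  p.@[vext v x] = (map_poly (meval v) (muni p)).[x].
Proof.
elim/mpolyind: p => [|c mm p _ _ IH].
  by rewrite meval0 raddf0 raddf0 horner0.
rewrite mevalD muniD raddfD /= hornerD IH; congr (_ + _).
rewrite muniZ mevalZ map_polyZ hornerZ /= mevalC; congr (_ * _).
rewrite muniE msuppX big_seq1 mcoeffX eqxx scale1r map_polyZ map_polyXn hornerZ hornerXn /=.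
rewrite !mevalX big_ord_recr /=; congr (_ * _).
  apply: eq_bigr => j _; rewrite mnmE.
  have -> : widen_ord (leqnSn m) j = lift ord_max j by apply: ord_inj; rewrite lift_max.
  by rewrite /vext liftK.
by rewrite /vext unlift_none.
Qed.


Definition mrestr m (mm : 'X_{1..m.+1}) : 'X_{1..m} := [multinom mm (widen_ord (leqnSn m) i) | i < m].

Lemma mrestr_inj m (a b : 'X_{1..m.+1}) : mrestr a = mrestr b -> a ord_max = b ord_max -> a = b.
Proof.
move=> H1 H2; apply/mnmP => i.
case: (unliftP ord_max i) => [j ->|->] //.
have := congr1 (fun mm : 'X_{1..m} => mm j) H1; rewrite /mrestr !mnmE.
by have -> : widen_ord (leqnSn m) j = lift ord_max j by apply: ord_inj; rewrite lift_max.
Qed.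

Lemma muni_neq0 (k : fieldType) m (p : {mpoly k[m.+1]}) : p != 0 -> muni p != 0.
Proof.
move=> Hp.
have [m0 Hm0] : exists m0, m0 \in msupp p.
  case E: (msupp p) => [|m0 s]; last by exists m0; rewrite in_cons eqxx.
  by move: Hp; rewrite [p]mpolyE E big_nil eqxx.
apply/negP => /eqP H0.
have : ((muni p)`_(m0 ord_max))@_(mrestr m0) = p@_m0.
  rewrite muniE coef_sum raddf_sum /= (bigD1_seq m0) ?msupp_uniq //=.
  rewrite big1_seq ?addr0.
    rewrite coefZ coefXn eqxx mulr1 mcoeffZ mcoeffX.
    by rewrite (_ : [multinom [tuple m0 (widen_ord (leqnSn m) i0) | i0 < m]] = mrestr m0) // eqxx mulr1.
  move=> mm /andP[Hne _]; rewrite coefZ coefXn.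
  case: (eqVneq (m0 ord_max) (mm ord_max)) => [E|E]; last by rewrite mulr0 mcoeff0.
  rewrite mulr1 mcoeffZ mcoeffX.
  case: (eqVneq [multinom [tuple mm (widen_ord (leqnSn m) i0) | i0 < m]] (mrestr m0)) => [E2|E2].
    by move: Hne; rewrite (@mrestr_inj m mm m0 E2 (esym E)) eqxx.
  by rewrite mulr0.
rewrite H0 coef0 mcoeff0 => /esym /eqP.
by move: Hm0; rewrite mcoeff_msupp => /negP H1 H2; apply: H1.
Qed.


Lemma mpoly_nonroot (k : fieldType) (char0 : [pchar k] =i pred0) m (p : {mpoly k[m]}) :
  p != 0 -> exists v : 'I_m -> k, p.@[v] != 0.
Proof.
elim: m p => [|m IH] p Hp.
  exists (fun _ => 0); rewrite (nvar0_mpolyC p) mevalC.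
  by apply: contraNneq Hp => E; rewrite (nvar0_mpolyC p) E.
have Hq := muni_neq0 Hp.
have Hlc : lead_coef (muni p) != 0 by rewrite lead_coef_eq0.
have [v Hv] := IH _ Hlc.
have Hr : map_poly (meval v) (muni p) != 0.
  apply/negP => /eqP E.
  have := coef_map (meval v) (muni p) (size (muni p)).-1.
  by rewrite E coef0 /= => /esym; apply/eqP.
have [x Hx] := poly_nonroot char0 Hr.
by exists (vext v x); rewrite muni_eval.
Qed.

Definition detpoly (k : fieldType) n : {mpoly k[n * n]} :=
  \det (\matrix_(i < n, j < n) 'X_(mxvec_index i j)).

Lemma detpoly_eval (k : fieldType) n (g : 'M[k]_n) :
  (detpoly k n).@[fun ij => mxvec g 0 ij] = \det g.
Proof.
rewrite /detpoly -det_map_mx; congr (\det _); apply/matrixP => i j.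
rewrite !mxE /= -mxvecE; exact: mevalXU.
Qed.

Lemma good_g (k : fieldType) (char0 : [pchar k] =i pred0) n (P : {mpoly k[n * n]}) :
  P != 0 -> exists g : 'M[k]_n, g \in unitmx /\ P.@[fun ij => mxvec g 0 ij] != 0.
Proof.
move=> HP.
have HD : detpoly k n != 0.
  apply/negP => /eqP E; have := detpoly_eval (1%:M : 'M[k]_n).
  by rewrite E meval0 det1 => /eqP; rewrite eq_sym oner_eq0.
have [w Hw] := mpoly_nonroot char0 (mulf_neq0 HP HD).
pose g : 'M[k]_n := vec_mx (\row_ij w ij).
have Eg : (fun ij => mxvec g 0 ij) =1 w by move=> ij; rewrite /g vec_mxK mxE.
move: Hw; rewrite mevalM mulf_eq0 negb_or => /andP[H1 H2].
exists g; split.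
  rewrite unitmxE unitfE -detpoly_eval.
  by rewrite (meval_eq _ Eg).
by rewrite (meval_eq _ Eg).
Qed.

Local Close Scope ring_scope.

Theorem lemma2p1 (k : fieldType) (n : nat)
  (char0 : [pchar k]%R =i pred0)
  (I : {mpoly k[n]} -> Prop) (J : 'X_{1..n} -> Prop) :
  is_homogeneous_ideal I -> is_artinian I -> is_gin I J ->
  (almost_revlex J <->
   forall i : nat, (1 <= i <= n - 1)%N ->
     (forall alpha : seq nat, size alpha = i -> inJset J alpha ->
        ole (osucc (fJ J (rcons (nseq (i - 1) 0%N) (sumn alpha).+1)))
            (fJ J alpha)) /\
     (forall alpha beta : seq nat, size alpha = i -> size beta = i ->
        inJset J alpha -> inJset J beta -> sumn alpha = sumn beta ->
        drevlt (mono_of n alpha) (mono_of n beta) ->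
        ole (fJ J beta) (fJ J alpha))).
Proof.
move=> [HI _] _ [P [HP Hall]].
have [g [Hg HPg]] := good_g char0 HP.
have HU : upclosed J.
  apply: upclosed_of => m i Jm.
  apply/(Hall g Hg HPg); apply: in_ideal_shift => //.
  exact/(Hall g Hg HPg).
exact: comb_main HU.
Qed.
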